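(* There exist a binary matrix $A$ and two binary column vectors $x,y$ such that $R_{binary}(A|x)=R_{binary}(A|y)=R_{binary}(A)$, but $R_{binary}(A|x,y)>R_{binary}(A)$.
   Context: For a binary $n\times m$ matrix $A$, $R_{binary}(A)$ is the least $k$ such that $A=UV$ with $U\in\{0,1\}^{n\times k}$, $V\in\{0,1\}^{k\times m}$, ordinary arithmetic. $(A|x_1,\dots,x_t)$ denotes $A$ with columns $x_1,\dots,x_t$ appended on the right. *)

(* Defs.v *)
From mathcomp Require Import all_boot all_order all_algebra.
Set Implicit Arguments. Unset Strict Implicit. Unset Printing Implicit Defensive.
Import GRing.Theory.
Local Open Scope ring_scope.

(* Binary matrices are integer matrices with all entries in {0,1};
   products use ordinary integer arithmetic. *)
Definition binary_mx (n m : nat) (A : 'M[int]_(n, m)) : Prop :=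
  forall i j, A i j = 0 \/ A i j = 1.

Definition binary_factorizable (n m : nat) (A : 'M[int]_(n, m)) (k : nat) : Prop :=
  exists (U : 'M[int]_(n, k)) (V : 'M[int]_(k, m)),
    binary_mx U /\ binary_mx V /\ A = U *m V.

Definition is_binary_rank (n m : nat) (A : 'M[int]_(n, m)) (r : nat) : Prop :=
  binary_factorizable A r /\ (forall k, binary_factorizable A k -> (r <= k)%N).

(* Main.v *)
Require Import Defs.
From mathcomp Require Import all_boot all_order all_algebra.
Set Implicit Arguments. Unset Strict Implicit. Unset Printing Implicit Defensive.
Import Order.TTheory GRing.Theory Num.Theory.
From mathcomp Require Import zify.
Local Open Scope ring_scope.

Definition tbl n m (r : seq (seq nat)) : 'M[int]_(n, m) :=
  \matrix_(i, j) (nth 0%N (nth [::] r i) j)%:Z.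

Definition Am := tbl 4 3 [:: [:: 1; 1; 1]; [:: 1; 0; 1]; [:: 0; 1; 1]; [:: 0; 0; 1]]%N.
Definition xm := tbl 4 1 [:: [:: 0]; [:: 1]; [:: 0]; [:: 1]]%N.
Definition ym := tbl 4 1 [:: [:: 0]; [:: 0]; [:: 1]; [:: 1]]%N.

Lemma tbl_bin n m r : all (all (fun a => a <= 1)%N) r -> binary_mx (tbl n m r).
Proof.
move=> H i j; rewrite mxE.
have: (nth 0 (nth [::] r i) j <= 1)%N.
  case: (ltnP i (size r)) => Hi; last by rewrite (nth_default [::] Hi) nth_nil.
  have /allP Hr := all_nthP [::] H i Hi.
  case: (ltnP j (size (nth [::] r i))) => Hj; last by rewrite nth_default.
  exact: Hr _ (mem_nth 0%N Hj).
by case: (nth 0 _ _) => [|[|]]; auto.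
Qed.

Ltac ordcase i := case: i => [[|[|[|[|[|i]]]]] ?] //.

Lemma eqA : Am = Am *m 1%:M.
Proof. by rewrite mulmx1. Qed.

Definition Ux := tbl 4 3 [:: [:: 1; 1; 0]; [:: 1; 0; 1]; [:: 0; 1; 0]; [:: 0; 0; 1]]%N.
Definition Vxa := tbl 3 3 [:: [:: 1; 0; 0]; [:: 0; 1; 1]; [:: 0; 0; 1]]%N.
Definition Vxx := tbl 3 1 [:: [:: 0]; [:: 0]; [:: 1]]%N.

Lemma eqx1 : Am = Ux *m Vxa.
Proof.
apply/matrixP => i j; rewrite !mxE !big_ord_recr big_ord0 /= !mxE.
by ordcase i; ordcase j.
Qed.

Definition M5 := tbl 4 5 [:: [:: 1; 1; 1; 0; 0]; [:: 1; 0; 1; 1; 0]; [:: 0; 1; 1; 0; 1]; [:: 0; 0; 1; 1; 1]]%N.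

Lemma M5E : row_mx (row_mx Am xm) ym = M5.
Proof.
apply/matrixP=> i j; rewrite mxE; case: splitP => k Hk.
  rewrite mxE; case: splitP => k' Hk'; rewrite !mxE; move: Hk Hk'.
    by ordcase i; ordcase j; ordcase k; ordcase k'.
  by ordcase i; ordcase j; ordcase k; ordcase k'.
by rewrite !mxE; move: Hk; ordcase i; ordcase j; ordcase k.
Qed.

Lemma bin_row n m1 m2 (A : 'M[int]_(n, m1)) (B : 'M[int]_(n, m2)) :
  binary_mx A -> binary_mx B -> binary_mx (row_mx A B).
Proof. by move=> HA HB i j; rewrite mxE; case: splitP. Qed.

Lemma fact_l n m1 m2 (A : 'M[int]_(n, m1)) (B : 'M[int]_(n, m2)) k :
  binary_factorizable (row_mx A B) k -> binary_factorizable A k.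
Proof.
move=> [U [V [HU [HV E]]]]; exists U, (lsubmx V); split; first by [].
split; first by move=> i j; rewrite mxE.
move: E; rewrite -[V]hsubmxK mul_mx_row => /eq_row_mx [-> _].
by rewrite row_mxKl.
Qed.

Lemma bin01 (a : int) : a = 0 \/ a = 1 -> 0 <= a.
Proof. by case=> ->. Qed.

Lemma wit n m k (U : 'M[int]_(n, k)) (V : 'M[int]_(k, m)) i j :
  binary_mx U -> binary_mx V -> (U *m V) i j = 1 ->
  exists l, U i l = 1 /\ V l j = 1.
Proof.
move=> HU HV; rewrite mxE.
have [l /andP[/eqP ? /eqP ?]|H] := pickP (fun l => (U i l == 1) && (V l j == 1)).
  by exists l.
rewrite big1 // => l _; move: (H l).
by case: (HU i l) => ->; case: (HV l j) => ->.
Qed.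

Lemma term_nz n m k (U : 'M[int]_(n, k)) (V : 'M[int]_(k, m)) i j l :
  binary_mx U -> binary_mx V -> U i l = 1 -> V l j = 1 -> (U *m V) i j != 0.
Proof.
move=> HU HV H1 H2; rewrite mxE (bigD1 l) //= H1 H2 mul1r.
have : 0 <= \sum_(l0 < k | l0 != l) U i l0 * V l0 j.
  by apply: sumr_ge0 => l0 _; apply: mulr_ge0; apply: bin01.
by move=> Hs; rewrite gt_eqF // ltr_pwDl.
Qed.

Lemma fooling n m (M : 'M[int]_(n, m)) k (ps : seq ('I_n * 'I_m)) :
  binary_factorizable M k -> uniq ps ->
  all (fun p => M p.1 p.2 == 1) ps ->
  all (fun p1 => all (fun p2 => [|| p1 == p2, M p1.1 p2.2 == 0 | M p2.1 p1.2 == 0]) ps) ps ->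
  (size ps <= k)%N.
Proof.
move=> [U [V [HU [HV E]]]] Hu /allP H1 /allP H2.
pose g p := [pick l | (U p.1 l == 1) && (V l p.2 == 1)].
have Hg : forall p, p \in ps -> exists l, g p = Some l /\ U p.1 l = 1 /\ V l p.2 = 1.
  move=> p /H1 /eqP; rewrite E => /wit [] // l [Ul Vl].
  rewrite /g; case: pickP => [l' /andP[/eqP ? /eqP ?]|/(_ l)]; first by exists l'.
  by rewrite Ul Vl !eqxx.
rewrite -(size_map g).
have Hk : size (map (@Some 'I_k) (enum 'I_k)) = k by rewrite size_map size_enum_ord.
rewrite -[X in (_ <= X)%N]Hk.
apply: uniq_leq_size.
  rewrite map_inj_in_uniq // => p1 p2 Hp1 Hp2 Eg.
  have [l1 [g1 [U1 V1]]] := Hg _ Hp1; have [l2 [g2 [U2 V2]]] := Hg _ Hp2.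
  move: Eg; rewrite g1 g2 => -[El]; subst l2.
  have := H2 _ Hp1 => /allP /(_ _ Hp2) /or3P [/eqP //|| ].
    by rewrite E (negbTE (term_nz HU HV U1 V2)).
  by rewrite E (negbTE (term_nz HU HV U2 V1)).
move=> o /mapP [p Hp ->]; have [l [-> _]] := Hg _ Hp.
by apply: map_f; rewrite mem_enum.
Qed.

Lemma eqx2 : xm = Ux *m Vxx.
Proof.
apply/matrixP => i j; rewrite !mxE !big_ord_recr big_ord0 /= !mxE.
by ordcase i; ordcase j.
Qed.

Definition Uy := tbl 4 3 [:: [:: 1; 1; 0]; [:: 1; 0; 0]; [:: 0; 1; 1]; [:: 0; 0; 1]]%N.
Definition Vya := tbl 3 3 [:: [:: 1; 0; 1]; [:: 0; 1; 0]; [:: 0; 0; 1]]%N.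
Definition Vyy := tbl 3 1 [:: [:: 0]; [:: 0]; [:: 1]]%N.

Lemma eqy1 : Am = Uy *m Vya.
Proof.
apply/matrixP => i j; rewrite !mxE !big_ord_recr big_ord0 /= !mxE.
by ordcase i; ordcase j.
Qed.

Lemma eqy2 : ym = Uy *m Vyy.
Proof.
apply/matrixP => i j; rewrite !mxE !big_ord_recr big_ord0 /= !mxE.
by ordcase i; ordcase j.
Qed.

Lemma bin1 k : binary_mx (1%:M : 'M[int]_k).
Proof. by move=> i j; rewrite mxE; case: (i == j); [right|left]. Qed.

Lemma lowA k : binary_factorizable Am k -> (3 <= k)%N.
Proof.
move=> H.
have := @fooling _ _ Am k [:: (@Ordinal 4 0 isT, @Ordinal 3 0 isT);
   (@Ordinal 4 2 isT, @Ordinal 3 1 isT); (@Ordinal 4 3 isT, @Ordinal 3 2 isT)] H.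
by rewrite /= !mxE /=; apply.
Qed.

Lemma lowM k : binary_factorizable M5 k -> (4 <= k)%N.
Proof.
move=> H.
have := @fooling _ _ M5 k [:: (@Ordinal 4 0 isT, @Ordinal 5 0 isT);
   (@Ordinal 4 1 isT, @Ordinal 5 3 isT); (@Ordinal 4 2 isT, @Ordinal 5 1 isT);
   (@Ordinal 4 3 isT, @Ordinal 5 4 isT)] H.
by rewrite /= !mxE /=; apply.
Qed.

Theorem mainTheorem7 :
  exists (n m : nat) (A : 'M[int]_(n, m)) (x y : 'cV[int]_n) (r r' : nat),
    binary_mx A /\ binary_mx x /\ binary_mx y /\
    is_binary_rank A r /\
    is_binary_rank (row_mx A x) r /\
    is_binary_rank (row_mx A y) r /\
    is_binary_rank (row_mx (row_mx A x) y) r' /\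
    (r < r')%N.
Proof.
have bA : binary_mx Am by apply: tbl_bin.
have bx : binary_mx xm by apply: tbl_bin.
have by' : binary_mx ym by apply: tbl_bin.
exists 4%N, 3%N, Am, xm, ym, 3%N, 4%N.
split; first by [].
split; first by [].
split; first by [].
split.
  split; last exact: lowA.
  by exists Am, 1%:M; split; [|split; [apply: bin1|rewrite mulmx1]].
split.
  split; last by move=> k /fact_l; apply: lowA.
  exists Ux, (row_mx Vxa Vxx); split; first by apply: tbl_bin.
  split; first by apply: bin_row; apply: tbl_bin.
  by rewrite mul_mx_row -eqx1 -eqx2.
split.
  split; last by move=> k /fact_l; apply: lowA.
  exists Uy, (row_mx Vya Vyy); split; first by apply: tbl_bin.
  split; first by apply: bin_row; apply: tbl_bin.
  by rewrite mul_mx_row -eqy1 -eqy2.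
split; last by [].
split; last by rewrite M5E; apply: lowM.
exists 1%:M, (row_mx (row_mx Am xm) ym); split; first exact: bin1.
split; first by apply: bin_row => //; apply: bin_row.
by rewrite mul1mx.
Qed.
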